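(* For all integers $n,m\ge0$, $$\sum_{k=0}^n\binom{n}{k}H_k(m)=\sum_{j=0}^m\binom{m}{j}\sum_{k=0}^nH_k(j)(-1)^{n-k}2^k\frac{(m-j)!}{(n-k)!}s(n-k,m-j).$$ In particular, $\sum_{k=0}^n\binom{n}{k}H_k=2^n\left(H_n-\sum_{k=1}^n\frac{1}{2^kk}\right)$.
   Context: For integers $m\ge 1$, $n\ge 0$, the multiple harmonic-like numbers are $H_n(m)=\sum_{1\le k_1+k_2+\cdots+k_m\le n}\frac{1}{k_1k_2\cdots k_m}$ (sum over positive integers $k_1,\dots,k_m$), with $H_n(0)=1$ for $n\ge 0$ and $H_0(m)=0$ for $m\ge1$. Equivalently, $\sum_{n\ge0}H_n(m)z^n=\frac{(-\ln(1-z))^m}{1-z}$. $H_n=H_n(1)=\sum_{k=1}^n\frac1k$. The (signed) Stirling numbers of the first kind $s(n,k)$ are defined by $\sum_{n\ge k}s(n,k)\frac{z^n}{n!}=\frac{\ln^k(1+z)}{k!}$, with $s(n,k)=0$ for $n<k$. *)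

(* Defs.v *)
From mathcomp Require Import all_boot all_order all_algebra.
Set Implicit Arguments. Unset Strict Implicit. Unset Printing Implicit Defensive.
Import Order.TTheory GRing.Theory Num.Theory.
Local Open Scope ring_scope.

(* Each k_i <= n, so we range over functions 'I_m -> 'I_n.+1.
   For m = 0 the empty tuple gives H_n(0) = 1; for m >= 1, H_0(m) = 0. *)
Definition Hm (n m : nat) : rat :=
  \sum_(t : {ffun 'I_m -> 'I_n.+1} |
        [forall i, 0 < (t i : nat)]%N && (\sum_(i < m) (t i : nat) <= n)%N)
     \prod_(i < m) ((t i : nat)%:R)^-1.

Definition harm (n : nat) : rat := \sum_(1 <= k < n.+1) (k%:R)^-1.

Fixpoint stir1 (n k : nat) {struct n} : int :=
  match n, k with
  | 0, 0 => 1
  | 0, _.+1 => 0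
  | _.+1, 0 => 0
  | n'.+1, k'.+1 => stir1 n' k' - (n'%:Z) * stir1 n' k'.+1
  end.

(* Main.v *)
Require Import Defs.
From mathcomp Require Import all_boot all_order all_algebra zify ring.
Import Order.TTheory GRing.Theory Num.Theory.
Local Open Scope ring_scope.

Set Implicit Arguments.
Definition eqN (N : nat) (p q : {poly rat}) := forall i, (i <= N)%N -> p`_i = q`_i.

Lemma eqN_mul N p p' q q' : eqN N p p' -> eqN N q q' -> eqN N (p * q) (p' * q').
Proof.
move=> hp hq i hi; rewrite !coefM; apply: eq_bigr => j _.
rewrite hp ?hq //; first exact: leq_trans (leq_subr _ _) hi.
exact: leq_trans (ltnSE (ltn_ord j)) hi.
Qed.

Lemma eqN_exp N p p' k : eqN N p p' -> eqN N (p ^+ k) (p' ^+ k).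
Proof.
move=> h; elim: k => [|k IH]; first by [].
by rewrite !exprS; apply: eqN_mul.
Qed.

Lemma hockey i j : (\sum_(k < j.+1) 'C(k + i, i) = 'C(j + i.+1, i.+1))%N.
Proof.
elim: j => [|j IH]; first by rewrite big_ord1 add0n binn add0n binn.
by rewrite big_ord_recr /= IH addSn [(j.+1 + i.+1)%N]addSn binS addnS.
Qed.

Definition gs N : {poly rat} := \poly_(i < N.+1) 1.
Definition lg N : {poly rat} := \poly_(i < N.+1) (i%:R)^-1.

Lemma gs_exp N i j : (j <= N)%N -> (gs N ^+ i.+1)`_j = ('C(j + i, i))%:R.
Proof.
elim: i j => [|i IH] j hj.
  by rewrite expr1 coef_poly ltnS hj addn0 bin0.
rewrite exprS mulrC coefM -hockey natr_sum; apply: eq_bigr => k _.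
have hk : (k <= N)%N by exact: leq_trans (ltnSE (ltn_ord k)) hj.
rewrite IH // coef_poly ltnS (leq_trans (leq_subr _ _) hj) mulr1.
done.
Qed.

Lemma key_coef N i k : (k <= N)%N ->
  (gs N * ('X * gs N) ^+ i)`_k = ('C(k, i))%:R.
Proof.
move=> hk; rewrite exprMn mulrCA -exprS coefXnM.
case: ltnP => hki; first by rewrite bin_small.
by rewrite gs_exp ?subnK // (leq_trans (leq_subr _ _) hk).
Qed.

Lemma comp_poly_def n (E : nat -> rat) (q : {poly rat}) :
  (\poly_(i < n) E i) \Po q = \sum_(i < n) E i *: q ^+ i.
Proof.
rewrite poly_def (big_morph (comp_poly q) (fun p r => comp_polyD p r q) (comp_poly0 q)).
by apply: eq_bigr => i _; rewrite comp_polyZ comp_Xn_poly.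
Qed.

Lemma binT N n (E : nat -> rat) k : (k <= N)%N ->
  (gs N * ((\poly_(i < n) E i) \Po ('X * gs N)))`_k = \sum_(i < n) E i * ('C(k, i))%:R.
Proof.
move=> hk; rewrite comp_poly_def mulr_sumr coef_sum; apply: eq_bigr => i _.
by rewrite -scalerAr coefZ key_coef.
Qed.

Lemma sum_if_eq n k (a : rat) :
  \sum_(i < n) (if (i : nat) == k then a else 0) = if (k < n)%N then a else 0.
Proof.
elim: n => [|n IH]; first by rewrite big_ord0.
rewrite big_ord_recr /= IH.
case: (ltngtP k n) => h.
- by rewrite addr0 ltnS ltnW.
- by rewrite addr0 ltnS leqNgt h.
- by rewrite add0r h ltnSn.
Qed.

Lemma coef_scale (p : {poly rat}) c k : (p \Po (c%:P * 'X))`_k = c ^+ k * p`_k.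
Proof.
rewrite comp_polyE coef_sum.
rewrite (eq_bigr (fun i : 'I_(size p) => (if (i : nat) == k then c ^+ k * p`_k else 0))); last first.
  move=> i _; rewrite exprMn -polyC_exp coefZ coefCM coefXn.
  case: eqP => [->|hne]; first by rewrite eqxx mulr1 mulrC.
  have -> : ((i:nat) == k) = false by apply/eqP => h; apply: hne.
  by rewrite !mulr0.
rewrite sum_if_eq.
by case: ltnP => // hk; rewrite nth_default ?mulr0.
Qed.

Lemma pow2_sum k : \sum_(i < k.+1) ('C(k, i))%:R = 2 ^+ k :> rat.
Proof.
have := exprDn (1 : rat) 1 k; rewrite (_ : 1 + 1 = 2) //.
move=> ->; apply: eq_bigr => i _; by rewrite !expr1n mul1r.
Qed.

Lemma sumbin k :
  \sum_(i < k.+1) ('C(k, i))%:R / (i.+1)%:R = (2 ^+ k.+1 - 1) / (k.+1)%:R :> rat.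
Proof.
have -> : \sum_(i < k.+1) ('C(k, i))%:R / (i.+1)%:R =
          \sum_(i < k.+1) ('C(k.+1, i.+1))%:R / (k.+1)%:R :> rat.
  apply: eq_bigr => i _.
  have h := mul_bin_diag k.+1 i.
  apply/eqP; rewrite eqr_div ?pnatr_eq0 //; apply/eqP.
  by rewrite -!natrM mulnC h mulnC.
rewrite -mulr_suml -pow2_sum [in RHS]big_ord_recl bin0 addrC addKr; congr (_ / _); apply: eq_bigr => i _; rewrite lift0.
Qed.

Lemma sum_ext (F : nat -> rat) n m : (n <= m)%N ->
  (forall i, (n <= i)%N -> (i < m)%N -> F i = 0) ->
  \sum_(i < m) F i = \sum_(i < n) F i.
Proof.
move=> nm H; rewrite -(subnKC nm) big_split_ord /= [X in _ + X = _]big1 ?addr0 // => i _.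
apply: H; rewrite ?leq_addr //; have := ltn_ord i; lia.
Qed.

Lemma lg_comp N k : (k <= N)%N ->
  (lg N \Po ('X * gs N))`_k = (2 ^+ k - 1) / k%:R.
Proof.
move=> hk; rewrite /lg comp_poly_def coef_sum big_ord_recl /= invr0 scale0r coef0 add0r.
case: k hk => [|k] hk.
  rewrite expr0 subrr mul0r; apply: big1 => i _.
  by rewrite coefZ exprS -mulrA coefXM /= mulr0.
rewrite -sumbin.
rewrite (eq_bigr (fun i : 'I_N => ('C(k, i))%:R / (i.+1)%:R)); last first.
  move=> i _; rewrite coefZ exprMn coefXnM mulrC.
  rewrite /bump /= add1n.
  case: ltnP => hi; first by rewrite bin_small // mul0r.
  rewrite gs_exp; last by rewrite (leq_trans (leq_subr _ _) hk).
  by rewrite subSS subnK.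
rewrite (@sum_ext (fun i => ('C(k, i))%:R / (i.+1)%:R) k.+1) //.
by move=> i hi _; rewrite bin_small // mul0r.
Qed.

Lemma lg_trunc N k : (k <= N)%N -> eqN k (lg N) (lg k).
Proof.
by move=> hk i hi; rewrite !coef_poly !ltnS hi (leq_trans hi hk).
Qed.

Lemma gs_trunc N k : (k <= N)%N -> eqN k (gs N) (gs k).
Proof.
by move=> hk i hi; rewrite !coef_poly !ltnS hi (leq_trans hi hk).
Qed.

Lemma Hm_coef0 k m : Hm k m = (lg k ^+ m * gs k)`_k.
Proof.
have -> : lg k ^+ m = \prod_(i : 'I_m) lg k by rewrite prodr_const card_ord.
rewrite /lg poly_def.
rewrite (bigA_distr_bigA (fun (i : 'I_m) (j : 'I_k.+1) => (j%:R)^-1 *: ('X^j : {poly rat}))).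
rewrite mulr_suml coef_sum /Hm big_mkcond /=; apply: eq_bigr => f _.
rewrite scaler_prod prodrXr -scalerAl coefZ coefXnM.
case: ltnP => hs.
  by rewrite mulr0 andbF.
rewrite /gs coef_poly ltnS leq_subr mulr1 andbT.
case: (boolP [forall i, (0 < f i)%N]) => [//|].
rewrite negb_forall => /existsP [i]; rewrite -eqn0Ngt => /eqP hi.
by rewrite (bigD1 i) //= hi invr0 mul0r.
Qed.

Lemma Hm_coef N k m : (k <= N)%N -> Hm k m = (lg N ^+ m * gs N)`_k.
Proof.
move=> hk; rewrite Hm_coef0; symmetry.
exact: (eqN_mul (eqN_exp m (lg_trunc _ _ hk)) (gs_trunc _ _ hk) k (leqnn k)).
Qed.

Definition ee N p i := ((- lg N) ^+ i)`_p.

Lemma ee0 N i : ee N 0 i = (i == 0%N)%:R.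
Proof.
rewrite /ee; elim: i => [|i IH]; first by rewrite expr0 coefC.
by rewrite exprS coef0M IH coefN coef_poly /= invr0 oppr0 mul0r.
Qed.

Lemma invnK n : ((n.+1)%:R)^-1 *+ n.+1 = 1 :> rat.
Proof. by rewrite -[_ *+ _]mulr_natr mulVf // pnatr_eq0. Qed.

Lemma oneX_deriv N : (0 < N)%N -> eqN N.-1 ((1 - 'X) * (- lg N)^`()) (-1).
Proof.
move=> hN j hj; rewrite mulrBl mul1r coefB coefXM !coef_deriv !coefN !coef_poly coefC.
have hj1 : (j.+1 < N.+1)%N by lia.
rewrite hj1; case: j hj hj1 => [|j] hj hj1 /=.
  by rewrite subr0 invr1 mulr1n.
rewrite (ltnW hj1).
by rewrite !mulNrn !invnK opprK addNr oppr0.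
Qed.

Lemma ee_rec N p i : (p < N)%N ->
  (p.+1)%:R * ee N p.+1 i.+1 - p%:R * ee N p i.+1 = - (i.+1)%:R * ee N p i.
Proof.
move=> hp; rewrite /ee.
have hN : (0 < N)%N by lia.
have e1 : ((1 - 'X) * ((- lg N) ^+ i.+1)^`())`_p =
          (p.+1)%:R * ((- lg N) ^+ i.+1)`_p.+1 - p%:R * ((- lg N) ^+ i.+1)`_p.
  rewrite mulrBl mul1r coefB coefXM !coef_deriv.
  case: p hp => [|p] hp /=; first by rewrite mulr1n mul1r mul0r !subr0.
  by rewrite !mulr_natl.
rewrite -e1 deriv_exp /= mulrnAr mulrA coefMn.
have := eqN_mul (oneX_deriv N hN) (fun j (_ : (j <= N.-1)%N) => erefl (((- lg N) ^+ i)`_j)) p.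
move=> -> ; last by lia.
by rewrite mulN1r coefN mulNrn mulNr mulr_natl.
Qed.

Definition EE p i : rat := (i`!%:R / p`!%:R) * (-1) ^+ p * (stir1 p i)%:~R.

Lemma fact_neq0 n : (n`!%:R : rat) != 0.
Proof. by rewrite pnatr_eq0 -lt0n fact_gt0. Qed.

Lemma ee_stir N p i : (p <= N)%N -> ee N p i = EE p i.
Proof.
elim: p i => [|p IH] i hp.
  rewrite ee0 /EE expr0 mulr1.
  case: i => [|i] /=; last by rewrite mulr0.
  by rewrite divr1.
case: i => [|i].
  by rewrite /ee /EE expr0 coefC /= mulr0.
have r := ee_rec N p i hp.
rewrite !IH ?(ltnW hp) // in r.
apply: (mulfI (_ : (p.+1)%:R != 0 :> rat)); first by rewrite pnatr_eq0.
rewrite -[LHS](subrK (p%:R * EE p i.+1)) r.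
rewrite /EE /= !factS !natrM exprS.
rewrite (_ : ((stir1 p i - p%:Z * stir1 p i.+1)%:~R : rat) =
   (stir1 p i)%:~R - p%:R * (stir1 p i.+1)%:~R); last by rewrite rmorphB rmorphM.
have h1 := fact_neq0 p; have h2 := fact_neq0 i.
by field; rewrite h1 /= nat1r pnatr_eq0.
Qed.

Lemma binT' N (p : {poly rat}) k : (k <= N)%N ->
  (gs N * (p \Po ('X * gs N)))`_k = \sum_(i < k.+1) p`_i * ('C(k, i))%:R.
Proof.
move=> hk; rewrite -[p in p \Po _]coefK binT //.
rewrite -(@sum_ext (fun i => p`_i * ('C(k, i))%:R) (size p) (size p + k.+1)) ?leq_addr //; last first.
  by move=> i hi _; rewrite nth_default // mul0r.
rewrite (@sum_ext (fun i => p`_i * ('C(k, i))%:R) k.+1 (size p + k.+1)) ?leq_addl //.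
by move=> i hi _; rewrite bin_small // mulr0.
Qed.

Lemma comp_poly_exp (p q : {poly rat}) m : (p ^+ m) \Po q = (p \Po q) ^+ m.
Proof.
elim: m => [|m IH]; first by rewrite !expr0 -polyC1 comp_polyC.
by rewrite !exprS comp_polyM IH.
Qed.


Lemma part1 n m :
  \sum_(k < n.+1) 'C(n, k)%:R * Hm k m =
    \sum_(j < m.+1) 'C(m, j)%:R *
      \sum_(k < n.+1) Hm k j * (-1) ^+ (n - k) * 2 ^+ k
         * ((m - j)`!%:R / (n - k)`!%:R) * (stir1 (n - k) (m - j))%:~R.
Proof.
set XG := 'X * gs n.
set D := (lg n \Po (2%:P * 'X)) - lg n.
set G2 := gs n \Po (2%:P * 'X).
have s1 : \sum_(k < n.+1) 'C(n, k)%:R * Hm k m = (gs n * ((lg n ^+ m * gs n) \Po XG))`_n.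
  rewrite binT'; last exact: leqnn.
  apply: eq_bigr => k _.
  rewrite (Hm_coef n); last by rewrite -ltnS.
  exact: mulrC.
have s4 : eqN n (lg n \Po XG) D.
  move=> k hk; rewrite lg_comp; last exact: hk.
  rewrite /D coefB coef_scale.
  by rewrite /lg coef_poly ltnS hk mulrBl mul1r.
have s5 : eqN n (gs n * (gs n \Po XG)) G2.
  move=> k hk; rewrite binT'; last exact: hk.
  rewrite /G2 coef_scale /gs coef_poly ltnS hk mulr1 -pow2_sum.
  apply: eq_bigr => i _; rewrite coef_poly.
  by rewrite (leq_trans (ltn_ord i)) ?mul1r // ltnS.
rewrite s1 comp_polyM comp_poly_exp mulrCA.
rewrite (eqN_mul (eqN_exp m s4) s5 n (leqnn n)).
rewrite /D addrC exprDn mulr_suml coef_sum; apply: eq_bigr => j _.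
rewrite [in LHS]mulrnAl coefMn [in RHS]mulr_natl; congr (_ *+ _).
rewrite -mulrA mulrC coefM; apply: eq_bigr => k _.
have hk : (k <= n)%N by rewrite -ltnS.
rewrite /G2 -comp_poly_exp -comp_polyM coef_scale -(Hm_coef n); last exact: hk.
rewrite -/(ee n (n - k) (m - j)) ee_stir; last exact: leq_subr.
rewrite /EE.
ring.
Qed.

Lemma harmS k : harm k.+1 = harm k + (k.+1)%:R^-1.
Proof. by rewrite /harm big_nat_recr. Qed.

Lemma harm0 : harm 0 = 0.
Proof. by rewrite /harm big_geq. Qed.

Lemma part2 n : \sum_(k < n.+1) 'C(n, k)%:R * harm k =
    2 ^+ n * (harm n - \sum_(1 <= k < n.+1) ((2 ^+ k * k%:R) : rat)^-1).
Proof.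
elim: n => [|n IH].
  by rewrite big_ord1 harm0 mulr0 big_geq // subrr mulr0.
have Sa : \sum_(k < n.+1) 'C(n, k.+1)%:R * harm k.+1 =
          \sum_(k < n.+1) 'C(n, k)%:R * harm k :> rat.
  rewrite big_ord_recr /= bin_small // mul0r addr0.
  by rewrite [RHS]big_ord_recl /= harm0 mulr0 add0r.
have Sb : \sum_(k < n.+1) 'C(n, k)%:R * harm k.+1 =
          \sum_(k < n.+1) 'C(n, k)%:R * harm k + (2 ^+ n.+1 - 1) / (n.+1)%:R :> rat.
  rewrite -sumbin -big_split /=; apply: eq_bigr => k _.
  by rewrite harmS mulrDr.
rewrite big_ord_recl /= harm0 mulr0 add0r.
rewrite (eq_bigr (fun k : 'I_n.+1 => 'C(n, k.+1)%:R * harm k.+1 + 'C(n, k)%:R * harm k.+1)); last first.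
  by move=> k _; rewrite binS natrD mulrDl.
rewrite big_split /= Sa Sb IH harmS [in RHS]big_nat_recr //=.
set A := (\sum_(1 <= i < n.+1) _).
rewrite !exprS.
have h2 : (2 ^+ n : rat) != 0 by rewrite expf_neq0.
have h3 : ((n.+1)%:R : rat) != 0 by rewrite pnatr_eq0.
field.
by rewrite h2 nat1r pnatr_eq0.
Qed.

Unset Implicit Arguments.

Theorem corollary3 : forall n m : nat,
  \sum_(k < n.+1) 'C(n, k)%:R * Hm k m =
    \sum_(j < m.+1) 'C(m, j)%:R *
      \sum_(k < n.+1) Hm k j * (-1) ^+ (n - k) * 2 ^+ k
         * ((m - j)`!%:R / (n - k)`!%:R) * (stir1 (n - k) (m - j))%:~R
  /\
  \sum_(k < n.+1) 'C(n, k)%:R * harm k =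
    2 ^+ n * (harm n - \sum_(1 <= k < n.+1) ((2 ^+ k * k%:R) : rat)^-1).
Proof. by move=> n m; split; [exact: part1 | exact: part2]. Qed.
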